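(* Let $G$ be a graph on $n$ vertices ($n$ even and sufficiently large) in which every vertex has at least $n-\sqrt{n}/4000$ neighbors, and let a perfect matching of $G$ be chosen uniformly at random. Then for every vertex $v$, there are at most $\sqrt{n}/9$ vertices $u$ such that the probability that $(u,v)$ is contained in the matching is less than $\frac{99}{100n}$. *)

(* Defs.v *)
From HB Require Import structures.
From mathcomp Require Import all_boot all_order all_algebra all_field.
Set Implicit Arguments. Unset Strict Implicit. Unset Printing Implicit Defensive.
Import Order.TTheory GRing.Theory Num.Theory.

Definition simple_graph (V : finType) (adj : rel V) : Prop :=
  symmetric adj /\ irreflexive adj.

Definition degree (V : finType) (adj : rel V) (v : V) : nat :=
  #|[set u | adj v u]|.

Definition is_edge (V : finType) (adj : rel V) (e : {set V}) : bool :=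
  [exists x, exists y, adj x y && (e == [set x; y])].

Definition perfect_matching (V : finType) (adj : rel V) (M : {set {set V}}) : bool :=
  [forall e in M, is_edge adj e] && [forall x, #|[set e in M | x \in e]| == 1%N].

Definition perfect_matchings (V : finType) (adj : rel V) : {set {set {set V}}} :=
  [set M | perfect_matching adj M].

Definition pm_prob (V : finType) (adj : rel V) (u v : V) : algC :=
  (#|[set M in perfect_matchings adj | [set u; v] \in M]|%:R /
   #|perfect_matchings adj|%:R)%R.

(* Main.v *)
Require Import Defs.
From HB Require Import structures.
From mathcomp Require Import all_boot all_order all_algebra all_field.
From mathcomp Require Import zify ring.
Import Order.TTheory GRing.Theory Num.Theory.
Set Implicit Arguments. Unset Strict Implicit. Unset Printing Implicit Defensive.


Lemma two_elem (V : finType) (a b c d : V) :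
  [set a; b] = [set c; d] -> c != d -> (a = c /\ b = d) \/ (a = d /\ b = c).
Proof.
move=> E ncd.
have ha : a \in [set c; d] by rewrite -E !inE eqxx.
have hb : b \in [set c; d] by rewrite -E !inE eqxx orbT.
have hc : c \in [set a; b] by rewrite E !inE eqxx.
have hd : d \in [set a; b] by rewrite E !inE eqxx orbT.
move: ha hb hc hd; rewrite !inE.
case/orP=> /eqP ea; subst a.
- move=> _ _ /orP[/eqP edc|/eqP edb]; first by rewrite edc eqxx in ncd.
  by left.
- move=> _ /orP[/eqP ecd|/eqP ecb] _; first by rewrite ecd eqxx in ncd.
  by right.
Qed.

Definition invS (V : finType) (adj : rel V) : {set {ffun V -> V}} :=
  [set p : {ffun V -> V} | [forall x, (p (p x) == x) && adj x (p x)]].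

Definition pmOf (V : finType) (p : {ffun V -> V}) : {set {set V}} :=
  [set [set x; p x] | x : V].

Lemma invSP (V : finType) (adj : rel V) (p : {ffun V -> V}) :
  reflect (forall x, p (p x) = x /\ adj x (p x)) (p \in invS adj).
Proof.
rewrite inE; apply: (iffP forallP) => H x.
  by case/andP: (H x) => /eqP.
by case: (H x) => -> ->; rewrite eqxx.
Qed.

Lemma mem_pmOf (V : finType) (adj : rel V) (irr : irreflexive adj) (p : {ffun V -> V}) a b :
  p \in invS adj -> ([set a; b] \in pmOf p) = (p a == b).
Proof.
move=> /invSP H; apply/imsetP/eqP.
  case=> y _ E.
  have nyq : y != p y by apply/eqP=> e; have := (H y).2; rewrite -e irr.
  case: (two_elem E nyq) => [[-> ->] | [-> ->]] //.
  by rewrite (H y).1.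
by move=> <-; exists a.
Qed.

Lemma pmOf_inj (V : finType) (adj : rel V) (irr : irreflexive adj) :
  {in invS adj &, injective (@pmOf V)}.
Proof.
move=> p q hp hq E; apply/ffunP=> x.
have : [set x; p x] \in pmOf q by rewrite -E; apply/imsetP; exists x.
by rewrite (mem_pmOf irr _ _ hq) => /eqP.
Qed.

Lemma pm_edge (V : finType) (adj : rel V) (sym : symmetric adj) (irr : irreflexive adj) M x y :
  perfect_matching adj M -> [set x; y] \in M -> adj x y.
Proof.
case/andP=> /forall_inP He _ /He /existsP[a /existsP[b /andP[ab /eqP E]]].
have nab : a != b by apply/eqP=> e; rewrite e irr in ab.
by case: (two_elem E nab) => [[-> ->]|[-> ->]]; rewrite // sym.
Qed.

Lemma pm_uniq (V : finType) (adj : rel V) (sym : symmetric adj) (irr : irreflexive adj) M x y y' :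
  perfect_matching adj M -> [set x; y] \in M -> [set x; y'] \in M -> y = y'.
Proof.
move=> pM h1 h2.
have a1 := pm_edge sym irr pM h1.
move: (pM) => /andP[_ /forallP /(_ x) /cards1P[e0 E0]].
have : [set x; y] \in [set e in M | x \in e] by rewrite !inE h1 eqxx.
have : [set x; y'] \in [set e in M | x \in e] by rewrite !inE h2 eqxx.
rewrite E0 !inE => /eqP <- /eqP E.
have nxy : x != y by apply/eqP=> e; rewrite e irr in a1.
have : y \in [set x; y'] by rewrite -E !inE eqxx orbT.
by rewrite !inE eq_sym (negbTE nxy) /= => /eqP.
Qed.


Lemma pm_exists (V : finType) (adj : rel V) M x :
  perfect_matching adj M -> exists y, [set x; y] \in M.
Proof.
move=> pM; move: (pM) => /andP[/forall_inP He /forallP /(_ x) /cards1P[e0 E0]].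
have : e0 \in [set e in M | x \in e] by rewrite E0 inE.
rewrite inE => /andP[e0M xe0].
case/existsP: (He _ e0M) => a /existsP[b /andP[_ /eqP E]].
move: xe0; rewrite E !inE => /orP[/eqP->|/eqP->].
  by exists b; rewrite -E.
by exists a; rewrite setUC -E.
Qed.

Definition partner (V : finType) (M : {set {set V}}) : {ffun V -> V} :=
  [ffun x => odflt x [pick y | [set x; y] \in M]].

Lemma partnerP (V : finType) (adj : rel V) M x :
  perfect_matching adj M -> [set x; partner M x] \in M.
Proof.
move=> pM; rewrite ffunE; case: pickP => [y //|H].
by case: (pm_exists x pM) => y; rewrite H.
Qed.

Lemma partner_inv (V : finType) (adj : rel V) (sym : symmetric adj) (irr : irreflexive adj) M :
  perfect_matching adj M -> partner M \in invS adj.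
Proof.
move=> pM; apply/invSP=> x; split; last exact: (pm_edge sym irr pM (partnerP x pM)).
apply: (pm_uniq sym irr pM (partnerP (partner M x) pM)).
by rewrite setUC; exact: (partnerP x pM).
Qed.

Lemma pmOf_inv (V : finType) (adj : rel V) (irr : irreflexive adj) (p : {ffun V -> V}) :
  p \in invS adj -> perfect_matching adj (pmOf p).
Proof.
move=> /invSP H; apply/andP; split.
  apply/forall_inP=> e /imsetP[x _ ->]; apply/existsP; exists x; apply/existsP; exists (p x).
  by rewrite (H x).2 eqxx.
apply/forallP=> y; apply/cards1P; exists [set y; p y]; apply/setP=> e.
rewrite !inE; apply/andP/eqP.
  case=> /imsetP[x _ ->]; rewrite !inE => /orP[/eqP->//|/eqP->].
  by rewrite (H x).1 setUC.
by move=> ->; split; [apply/imsetP; exists y | rewrite !inE eqxx].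
Qed.

Lemma pm_imset (V : finType) (adj : rel V) (sym : symmetric adj) (irr : irreflexive adj) :
  perfect_matchings adj = (@pmOf V) @: invS adj.
Proof.
apply/setP=> M; rewrite inE; apply/idP/imsetP.
  move=> pM; exists (partner M); first exact: partner_inv.
  apply/setP=> e; apply/idP/imsetP.
    move=> eM; move: (pM) => /andP[/forall_inP He _].
    case/existsP: (He _ eM) => a /existsP[b /andP[_ /eqP E]].
    exists a => //; rewrite E; congr [set a; _].
    apply: (pm_uniq (x:=a) sym irr pM); first by rewrite -E.
    exact: (partnerP a pM).
  by case=> x _ ->; exact: (partnerP x pM).
by case=> p hp ->; apply: pmOf_inv.
Qed.


Definition rew (V : finType) (p : V -> V) (a b c d : V) : {ffun V -> V} :=
  [ffun z => if z == a then b else if z == b then a else if z == c then d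
             else if z == d then c else p z].

Lemma rew_out (V : finType) (p : V -> V) a b c d z :
  z \notin [:: a; b; c; d] -> rew p a b c d z = p z.
Proof.
by rewrite ffunE !inE; case: (z =P a); case: (z =P b); case: (z =P c); case: (z =P d).
Qed.

Lemma rew_vals (V : finType) (p : V -> V) a b c d :
  [&& a != b, a != c, a != d, b != c, b != d & c != d] ->
  [/\ rew p a b c d a = b, rew p a b c d b = a, rew p a b c d c = d & rew p a b c d d = c].
Proof.
case/and5P=> ab ac ad bc /andP[bd cd].
rewrite !ffunE !eqxx !(eq_sym b a) !(eq_sym c a) !(eq_sym d a) !(eq_sym c b)
  !(eq_sym d b) !(eq_sym d c) (negbTE ab) (negbTE ac) (negbTE ad) (negbTE bc)
  (negbTE bd) (negbTE cd).
by [].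
Qed.

Lemma rew_invol (V : finType) (p : V -> V) a b c d :
  [&& a != b, a != c, a != d, b != c, b != d & c != d] ->
  (forall z, p (p z) = z) ->
  (forall z, p z \in [:: a; b; c; d] -> z \in [:: a; b; c; d]) ->
  forall z, rew p a b c d (rew p a b c d z) = z.
Proof.
move=> D pp hp z.
case: (rew_vals p D) => ra rb rc rd.
case: (boolP (z \in [:: a; b; c; d])).
  rewrite !inE => /or4P[] /eqP->.
  - by rewrite ra rb.
  - by rewrite rb ra.
  - by rewrite rc rd.
  - by rewrite rd rc.
move=> zn; rewrite (rew_out _ zn) rew_out ?pp //.
exact: (contra (hp z) zn).
Qed.


Definition pinv (V : finType) (adj : rel V) (p : V -> V) :=
  forall x, p (p x) = x /\ (p x != x -> adj x (p x)).

Definition NF (V : finType) (p : V -> V) := [set x | p x != x].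

Definition nonN (V : finType) (adj : rel V) (w : V) := [set y | ~~ adj w y].

Definition swap2 (V : finType) (p : V -> V) (a b : V) : {ffun V -> V} :=
  [ffun z => if z == a then b else if z == b then a else p z].

Lemma step_A (V : finType) (adj : rel V) (sym : symmetric adj) (p : V -> V) a b :
  pinv adj p -> p a = a -> p b = b -> a != b -> adj a b ->
  pinv adj (swap2 p a b) /\ NF (swap2 p a b) = a |: (b |: NF p).
Proof.
move=> hp pa pb nab ab.
have hs : forall z, swap2 p a b z = if z == a then b else if z == b then a else p z.
  by move=> z; rewrite ffunE.
have nba : (b == a) = false by rewrite eq_sym (negbTE nab).
split.
  move=> z; rewrite !hs.
  case: (z =P a) => [->|nza]; first by rewrite ?eqxx ?nba ?(negbTE nab).
  case: (z =P b) => [->|nzb]; first by rewrite ?eqxx ?nba ?(negbTE nab) // sym.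
  have pza : (p z == a) = false by apply/eqP=> e; apply: nza; rewrite -(hp z).1 e pa.
  have pzb : (p z == b) = false by apply/eqP=> e; apply: nzb; rewrite -(hp z).1 e pb.
  by rewrite pza pzb; apply: hp.
apply/setP=> z; rewrite !inE hs.
case: (z =P a) => [->|nza] /=; first by rewrite eq_sym nab.
case: (z =P b) => [->|nzb] /=; first by rewrite nab.
by [].
Qed.

Lemma step_B (V : finType) (adj : rel V) (sym : symmetric adj) (p : V -> V) a b x :
  pinv adj p -> p a = a -> p b = b -> a != b -> p x != x ->
  adj a x -> adj b (p x) ->
  pinv adj (rew p a x b (p x)) /\ NF (rew p a x b (p x)) = a |: (b |: NF p).
Proof.
move=> hp pa pb nab nx ax bx.
have ppx := (hp x).1.
have nax : a != x by apply/eqP=> e; move: nx; rewrite -e pa eqxx.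
have nay : a != p x.
  apply/eqP=> e; have ex : a = x by rewrite -[in RHS]ppx -e pa.
  by move: nx; rewrite -e ex eqxx.
have nxb : x != b by apply/eqP=> e; move: nx; rewrite e pb eqxx.
have nxy : x != p x by rewrite eq_sym.
have nby : b != p x.
  apply/eqP=> e; have ex : b = x by rewrite -[in RHS]ppx -e pb.
  by move: nx; rewrite -e ex eqxx.
have D : [&& a != x, a != b, a != p x, x != b, x != p x & b != p x].
  by rewrite nax nab nay nxb nxy nby.
have pp : forall z, p (p z) = z by move=> z; apply: (hp z).1.
have hP : forall z, p z \in [:: a; x; b; p x] -> z \in [:: a; x; b; p x].
  move=> z; rewrite !inE => /or4P[] /eqP e.
  - by rewrite -(pp z) e pa eqxx.
  - by rewrite -(pp z) e eqxx !orbT.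
  - by rewrite -(pp z) e pb eqxx !orbT.
  - by rewrite -(pp z) e ppx eqxx !orbT.
case: (rew_vals p D) => ra rx rb ry.
split.
  move=> z; split; first exact: rew_invol.
  case: (boolP (z \in [:: a; x; b; p x])).
    by rewrite !inE => /or4P[] /eqP->; rewrite ?ra ?rx ?rb ?ry // sym.
  by move=> zn; rewrite rew_out //; apply: (hp z).2.
apply/setP=> z; rewrite /NF !inE.
case: (boolP (z \in [:: a; x; b; p x])).
  rewrite !inE => /or4P[] /eqP->.
  - by rewrite ra eqxx /= (eq_sym x a).
  - by rewrite rx nx !orbT.
  - by rewrite rb eqxx orbT (eq_sym (p x) b).
  - by rewrite ry nby ppx (eq_sym x (p x)) nx !orbT.
move=> zn; rewrite rew_out //.
move: zn; rewrite !inE => /norP[/negbTE-> /norP[_ /norP[/negbTE-> _]]].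
by [].
Qed.

Lemma exists_pinv (V : finType) (adj : rel V) (sym : symmetric adj) (irr : irreflexive adj)
  K (HK : forall w, #|nonN adj w| <= K) (Hn : 3 * K < #|V|) :
  forall k, 2 * k <= #|V| -> exists p : V -> V, pinv adj p /\ #|NF p| = 2 * k.
Proof.
elim=> [_|k IH hk].
  exists id; split; first by move=> x; split=> //; rewrite eqxx.
  apply/eqP; rewrite cards_eq0; apply/eqP/setP=> x; rewrite !inE eqxx.
  by [].
have hk2 : 2 * k <= #|V| by lia.
case: (IH hk2) => p [hp cp].
have pp : forall z, p (p z) = z by move=> z; apply: (hp z).1.
set F := ~: NF p.
have cF : #|F| = #|V| - 2 * k by rewrite /F -(cardsC (NF p)) cp; lia.
have inF : forall z, (z \in F) = (p z == z) by move=> z; rewrite !inE negbK.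
case: (boolP [exists a, exists b, [&& a \in F, b \in F, a != b & adj a b]]).
  case/existsP=> a /existsP[b /and4P[aF bF nab ab]].
  rewrite inF in aF; rewrite inF in bF.
  have [hp' E] := step_A sym hp (eqP aF) (eqP bF) nab ab.
  exists (swap2 p a b); split=> //.
  rewrite E !cardsU1 cp /NF !inE aF bF (negbTE nab) /=; lia.
rewrite negb_exists => /forallP Hno.
have : 0 < #|F| by rewrite cF; lia.
case/card_gt0P => a aF.
have : 0 < #|F :\ a| by have := cardsD1 a F; rewrite aF cF; lia.
case/card_gt0P => b; rewrite !inE => /andP[nba bF].
have sF : F \subset nonN adj a.
  apply/subsetP=> z zF; rewrite inE.
  case: (z =P a) => [->|/eqP nza]; first by rewrite irr.
  have := Hno a; rewrite negb_exists => /forallP /(_ z).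
  by rewrite aF zF eq_sym nza.
have cFK : #|F| <= K by apply: leq_trans (subset_leq_card sF) (HK a).
set X := nonN adj a :|: (p @^-1: nonN adj b).
have cX : #|X| <= 2 * K.
  apply: leq_trans (leq_card_setU _ _).1 _.
  rewrite card_preimset; last exact: (can_inj pp).
  by have := HK a; have := HK b; lia.
have : 0 < #|NF p :\: X|.
  have := cardsID X (NF p); have := subset_leq_card (subsetIr (NF p) X).
  by lia.
case/card_gt0P => x; rewrite !inE => /andP[/norP[ax bx] nx].
rewrite !negbK in ax bx.
rewrite inF in aF; rewrite negbK in bF.
have nab : a != b by rewrite eq_sym.
have [hp' E] := step_B sym hp (eqP aF) (eqP bF) nab nx ax bx.
exists (rew p a x b (p x)); split=> //.
by rewrite E !cardsU1 cp /NF !inE aF bF (negbTE nab) /=; lia.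
Qed.

Lemma exists_inv (V : finType) (adj : rel V) (sym : symmetric adj) (irr : irreflexive adj)
  K (HK : forall w, #|nonN adj w| <= K) (Hn : 3 * K < #|V|) (Hev : ~~ odd #|V|) :
  exists q : {ffun V -> V}, q \in invS adj.
Proof.
have e2 : 2 * #|V|./2 = #|V| by have := odd_double_half #|V|; rewrite (negbTE Hev) -mul2n.
have [p [hp cp]] := exists_pinv sym irr HK Hn (eq_leq e2).
have all : forall z, p z != z.
  move=> z; have := cardsC (NF p); rewrite cp e2 => h.
  have : #|~: NF p| == 0 by apply/eqP; lia.
  rewrite cards_eq0 => /eqP E.
  have : z \notin ~: NF p by rewrite E inE.
  by rewrite !inE negbK.
exists [ffun z => p z]; apply/invSP=> x; rewrite !ffunE.
by split; [apply: (hp x).1 | apply: (hp x).2].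
Qed.


Definition Nset (V : finType) (adj : rel V) (v u : V) :=
  [set q in invS adj | q v == u].
Definition Gset (V : finType) (adj : rel V) (v u : V) :=
  [set q in invS adj | (q v != u) && adj (q v) (q u)].
Definition Bset (V : finType) (adj : rel V) (v u : V) :=
  [set q in invS adj | ~~ adj (q v) (q u)].

Definition swp (V : finType) (v u : V) (q : {ffun V -> V}) : {ffun V -> V} :=
  rew q v u (q v) (q u).

Lemma G_facts (V : finType) (adj : rel V) (irr : irreflexive adj) v u q :
  q \in Gset adj v u ->
  [/\ (forall z, q (q z) = z), (forall z, adj z (q z)),
    [&& v != u, v != q v, v != q u, u != q v, u != q u & q v != q u] & adj (q v) (q u)].
Proof.
rewrite inE => /andP[/invSP hq /andP[nu aw]].
have qq : forall z, q (q z) = z by move=> z; apply: (hq z).1.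
have qa : forall z, adj z (q z) by move=> z; apply: (hq z).2.
have ne : forall z, z != q z by move=> z; apply/eqP=> e; have := qa z; rewrite -e irr.
split=> //.
have h1 : v != u by apply/eqP=> e; move: aw; rewrite -e irr.
have h2 : v != q u by apply/eqP=> e; move: nu; rewrite e qq eqxx.
have h3 : u != q v by rewrite eq_sym.
have h4 : q v != q u by apply/eqP=> e; move: h1; rewrite -[u]qq -e qq eqxx.
by rewrite h1 ne h2 h3 ne h4.
Qed.

Lemma swp_N (V : finType) (adj : rel V) (sym : symmetric adj) (irr : irreflexive adj) v u q :
  adj v u -> q \in Gset adj v u -> swp v u q \in Nset adj v u.
Proof.
move=> avu hG; have [qq qa D awx] := G_facts irr hG.
have hP : forall z, q z \in [:: v; u; q v; q u] -> z \in [:: v; u; q v; q u].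
  move=> z; rewrite !inE => /or4P[] /eqP e.
  - by rewrite -(qq z) e eqxx !orbT.
  - by rewrite -(qq z) e eqxx !orbT.
  - by rewrite -(qq z) e qq eqxx.
  - by rewrite -(qq z) e qq eqxx !orbT.
have [rv ru rw rx] := rew_vals q D.
rewrite inE /swp rv eqxx andbT; apply/invSP=> z; split; first exact: rew_invol.
case: (boolP (z \in [:: v; u; q v; q u])).
  by rewrite !inE => /or4P[] /eqP->; rewrite ?rv ?ru ?rw ?rx // sym.
by move=> zn; rewrite rew_out.
Qed.

Lemma swp_rec (V : finType) (adj : rel V) (irr : irreflexive adj) v u q :
  q \in Gset adj v u -> q = rew (swp v u q) v (q v) u (swp v u q (q v)).
Proof.
move=> hG; have [qq qa D awx] := G_facts irr hG.
have [rv ru rw rx] := rew_vals q D.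
rewrite /swp rw.
move: (D) => /and5P[h1 h2 h3 h4 /andP[h5 h6]].
have D' : [&& v != q v, v != u, v != q u, q v != u, q v != q u & u != q u].
  by rewrite h1 h2 h3 h6 h5 eq_sym h4.
have [sv sw su sx] := rew_vals (rew q v u (q v) (q u)) D'.
apply/ffunP=> z.
case: (boolP (z \in [:: v; u; q v; q u])).
  rewrite !inE => /or4P[] /eqP->.
  - by rewrite sv.
  - by rewrite su.
  - by rewrite sw qq.
  - by rewrite sx qq.
move=> zn.
have zn' : z \notin [:: v; q v; u; q u].
  by move: zn; rewrite !inE; case: (z == v); case: (z == u); case: (z == q v).
by rewrite rew_out // rew_out.
Qed.

Lemma good_bound (V : finType) (adj : rel V) (sym : symmetric adj) (irr : irreflexive adj) v u :
  adj v u -> #|Gset adj v u| <= #|Nset adj v u| * #|V|.-1.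
Proof.
move=> avu.
pose g := fun q : {ffun V -> V} => (swp v u q, q v).
have inj : {in Gset adj v u &, injective g}.
  move=> q1 q2 h1 h2 [E1 E2].
  by rewrite (swp_rec irr h1) (swp_rec irr h2) E1 E2.
rewrite -(card_in_imset inj) -(cardsC1 v) -cardsX.
apply: subset_leq_card; apply/subsetP=> y /imsetP[q hq ->].
rewrite in_setX /=; apply/andP; split; first exact: (swp_N sym irr avu hq).
have [_ _ /and5P[_ h _ _ _] _] := G_facts irr hq.
by rewrite !inE eq_sym.
Qed.

Lemma cover_bound (V : finType) (adj : rel V) v u :
  #|invS adj| <= #|Nset adj v u| + #|Gset adj v u| + #|Bset adj v u|.
Proof.
apply: leq_trans (_ : #|Nset adj v u :|: Gset adj v u :|: Bset adj v u| <= _).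
  apply: subset_leq_card; apply/subsetP=> q hq; rewrite !inE; move: hq; rewrite inE => -> /=.
  by case: (q v == u); case: (adj (q v) (q u)).
apply: leq_trans (leq_card_setU _ _).1 _.
by rewrite leq_add2r; apply: (leq_card_setU _ _).1.
Qed.

Lemma card_sum (T : finType) (A : {set T}) (P : pred T) :
  #|[set x in A | P x]| = \sum_(x in A) (P x : nat).
Proof.
rewrite -sum1_card [LHS]big_mkcond [RHS]big_mkcond /=; apply: eq_bigr => x _.
by rewrite !inE; case: (x \in A); case: (P x).
Qed.

Lemma bad_sum (V : finType) (adj : rel V) (irr : irreflexive adj) K
  (HK : forall w, #|nonN adj w| <= K) v :
  \sum_u #|Bset adj v u| <= #|invS adj| * K.
Proof.
rewrite /Bset.
under eq_bigr => u _ do rewrite card_sum.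
rewrite exchange_big /= -sum_nat_const; apply: leq_sum => q hq.
have -> : \sum_i (~~ adj (q v) (q i) : nat) = #|[set i | ~~ adj (q v) (q i)]|.
  by rewrite -sum1dep_card [RHS]big_mkcond /=; apply: eq_bigr => i _; case: (~~ _).
have qq : forall z, q (q z) = z.
  by move=> z; have /invSP/(_ z) [] := hq.
apply: (leq_trans _ (HK (q v))).
rewrite -(card_preimset _ (can_inj qq)); apply: subset_leq_card.
by apply/subsetP=> u; rewrite /nonN !inE qq.
Qed.


Lemma core (V : finType) (adj : rel V) (sym : symmetric adj) (irr : irreflexive adj)
  K (HK : forall w, #|nonN adj w| <= K) (Hn : 3 * K < #|V|) (Hev : ~~ odd #|V|) v :
  0 < #|invS adj| /\
  #|[set u | 100 * #|V| * #|Nset adj v u| < 99 * #|invS adj|]| <= 101 * K.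
Proof.
have Tpos : 0 < #|invS adj|.
  have [q hq] := exists_inv sym irr HK Hn Hev.
  by apply/card_gt0P; exists q.
split=> //.
set T := #|invS adj|.
set Bb := [set u | T < 100 * #|Bset adj v u|].
have cB : #|Bb| <= 100 * K.
  have h1 : #|Bb| * T <= 100 * (T * K).
    apply: leq_trans (_ : \sum_(u in Bb) 100 * #|Bset adj v u| <= _).
      rewrite -sum_nat_const; apply: leq_sum => u; rewrite inE; exact: ltnW.
    apply: leq_trans (_ : \sum_u 100 * #|Bset adj v u| <= _).
      by rewrite [X in _ <= X](bigID (fun u => u \in Bb)) /=; apply: leq_addr.
    by rewrite -big_distrr /= leq_mul2l (bad_sum irr HK v) orbT.

  by rewrite mulnCA mulnC leq_pmul2l in h1.
apply: leq_trans (_ : #|nonN adj v :|: Bb| <= _).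
  apply: subset_leq_card; apply/subsetP=> u; rewrite inE => hu.
  rewrite !inE; apply/negPn/negP => /norP[/negPn avu /negP].
  move/negP; rewrite -leqNgt => hB.
  have := cover_bound adj v u; have := good_bound sym irr avu.
  have n1 : 0 < #|V| by apply/card_gt0P; exists v.
  move: hu; rewrite -/T; nia.
apply: leq_trans (leq_card_setU _ _).1 _.
by have := HK v; lia.
Qed.

Lemma card_PM (V : finType) (adj : rel V) (sym : symmetric adj) (irr : irreflexive adj) :
  #|perfect_matchings adj| = #|invS adj|.
Proof. by rewrite (pm_imset sym irr) card_in_imset //; apply: pmOf_inj. Qed.

Lemma card_PMuv (V : finType) (adj : rel V) (sym : symmetric adj) (irr : irreflexive adj) u v :
  #|[set M in perfect_matchings adj | [set u; v] \in M]| = #|Nset adj v u|.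
Proof.
have -> : [set M in perfect_matchings adj | [set u; v] \in M] = (@pmOf V) @: Nset adj v u.
  apply/setP=> M; rewrite inE (pm_imset sym irr); apply/andP/imsetP.
    case=> /imsetP[q hq ->]; rewrite (mem_pmOf irr _ _ hq) => /eqP e.
    exists q => //; rewrite inE hq /= -e.
    by have /invSP/(_ u) [-> _] := hq.
  case=> q; rewrite inE => /andP[hq /eqP e] ->; split; first by apply/imsetP; exists q.
  by rewrite (mem_pmOf irr _ _ hq) -e; have /invSP/(_ v) [-> _] := hq.
rewrite card_in_imset //; apply: sub_in2 (pmOf_inj irr).
by move=> q; rewrite inE => /andP[].
Qed.


Unset Implicit Arguments.

Theorem mainTheorem15 :
  exists N : nat, forall (n : nat) (adj : rel 'I_n),
    (N <= n)%N -> ~~ odd n -> simple_graph adj ->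
    (forall v : 'I_n,
        ((n%:R - sqrtC (n%:R) / 4000%:R)%R <= (degree adj v)%:R :> algC)%R) ->
    forall v : 'I_n,
      ((#|[set u : 'I_n | (pm_prob adj u v < 99%:R / (100 * n)%:R)%R]|)%:R
         <= sqrtC (n%:R) / 9%:R :> algC)%R.
Proof.
exists 0%N => n adj _ Hev [sym irr] Hdeg v.
have n0 : (0 < n)%N by apply: leq_ltn_trans (ltn_ord v).
have cV : #|'I_n| = n := card_ord n.
set s : algC := (sqrtC (n%:R) / 4000%:R)%R.
have Hnon : forall w, ((#|nonN adj w|)%:R <= s :> algC)%R.
  move=> w.
  have e : (#|nonN adj w| + degree adj w = n)%N.
    apply: etrans cV; rewrite -(cardsC [set u | adj w u]).
    rewrite /degree addnC; congr (_ + _)%N.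
    by apply: eq_card => y; rewrite /nonN !inE.
  have en : (n%:R : algC)%R = ((#|nonN adj w|)%:R + (degree adj w)%:R)%R by rewrite -natrD e.
  have := Hdeg w; rewrite {1}en lerBlDr addrC lerD2l.
  by [].
set K := (\max_w #|nonN adj w|)%N.
have HK : forall w, (#|nonN adj w| <= K)%N.
  by move=> w; rewrite /K; exact: (leq_bigmax w).
have HKs : (K%:R <= s :> algC)%R.
  rewrite /K; have [w0 ->] := bigop.eq_bigmax (fun w => #|nonN adj w|) (ltac:(by rewrite cV) : (0 < #|'I_n|)%N).
  exact: Hnon.
have H3 : (3 * K < #|'I_n|)%N.
  have h1 : ((K * 4000)%:R <= sqrtC (n%:R) :> algC)%R.
    by rewrite natrM -ler_pdivlMr ?ltr0n.
  have h2 : (((K * 4000) ^ 2)%:R <= n%:R :> algC)%R.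
    rewrite natrX -[X in (_ <= X)%R]sqrtCK ler_sqr // ?nnegrE ?ler0n //.
    by rewrite sqrtC_ge0 ler0n.
  rewrite ler_nat in h2; rewrite cV; nia.
have Hev' : ~~ odd #|'I_n| by rewrite cV.
have [Tpos cS] := core sym irr HK H3 Hev' v.
apply: le_trans (_ : (((101 * K)%N)%:R <= _)%R).
  rewrite ler_nat; apply: leq_trans cS; apply: subset_leq_card; apply/subsetP=> u.
  rewrite !inE; apply: contraTT; rewrite -leqNgt => h.
  rewrite le_gtF //.
  rewrite /pm_prob card_PMuv // card_PM // ler_pdivlMr ?ltr0n // mulrAC.
  rewrite ler_pdivrMr ?ltr0n ?muln_gt0 // -!natrM ler_nat.
  by rewrite cV in h; lia.
rewrite natrM.
apply: le_trans (ler_wpM2l (ler0n _ 101) HKs) _.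
have sg : (0 <= sqrtC (n%:R) :> algC)%R by rewrite sqrtC_ge0 ler0n.
rewrite /s.
have -> : (101%:R * (sqrtC n%:R / 4000%:R) = sqrtC n%:R * 909%:R / 9%:R / 4000%:R :> algC)%R.
  by field.
rewrite ler_pdivrMr ?ltr0n // ler_pdivrMr ?ltr0n //.
rewrite -!mulrA ler_wpM2l //.
by rewrite mulrC -mulrA divff ?pnatr_eq0 // mulr1 ler_nat.
Qed.
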